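(* Let $X$ be a Banach lattice with order continuous norm, let $(S_\lambda)_{\lambda\in\Lambda}$ be a family of convex monotone semigroups on $X$, and let $T$ be a semigroup which is an upper bound of $(S_\lambda)_{\lambda\in\Lambda}$. Then the semigroup envelope $S$ of $(S_\lambda)_{\lambda\in\Lambda}$ exists and is given by $S(t)x=\sup_{\pi\in P_t}J_\pi x$ for all $t\ge0$, $x\in X$. If $T$ is a $C_0$-semigroup and $S_{\lambda_0}$ is a $C_0$-semigroup for some $\lambda_0\in\Lambda$, then $S$ is a $C_0$-semigroup.
   Context: A Banach lattice $X$ has order continuous norm if $\|x_\alpha\|\to 0$ for every net $x_\alpha\downarrow 0$ (then every nonempty subset bounded above has a supremum). An operator $T\colon X\to X$ is convex if $T(\lambda x+(1-\lambda)y)\le\lambda Tx+(1-\lambda)Ty$, monotone if $x\le y\Rightarrow Tx\le Ty$, bounded if $\sup_{\|x\|\le r}\|Tx\|<\infty$ for all $r>0$. A semigroup on $X$ is a family $(S(t))_{t\ge0}$ of bounded operators $X\to X$ with $S(0)=\mathrm{id}$ and $S(t+s)=S(t)S(s)$; it is a $C_0$-semigroup if additionally $S(t)x\to x$ as $t\downarrow0$ for all $x$; convex/monotone if every $S(t)$ is. For semigroups $S,T$ write $S\le T$ if $S(t)x\le T(t)x$ for all $t,x$. $T$ is an upper bound of $(S_\lambda)$ if $T\ge S_\lambda$ for all $\lambda$; the (upper) semigroup envelope is the smallest upper bound. Let $P$ be the set of finite $\pi\subset[0,\infty)$ with $0\in\pi$, $P_t:=\{\pi\in P:\max\pi=t\}$.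 Define $J_hx:=\sup_{\lambda\in\Lambda}S_\lambda(h)x$ for $h>0$ ($J_0=\mathrm{id}$) and for $\pi=\{t_0<\dots<t_m\}$, $t_0=0$, $J_\pi:=J_{t_1-t_0}\cdots J_{t_m-t_{m-1}}$. *)

(* Defs.v *)
From HB Require Import structures.
From mathcomp Require Import all_boot all_order all_algebra.
From mathcomp Require Import all_classical all_reals all_analysis.
Set Implicit Arguments. Unset Strict Implicit. Unset Printing Implicit Defensive.
Import Order.TTheory GRing.Theory Num.Theory.
Import numFieldNormedType.Exports.
Local Open Scope classical_set_scope.
Local Open Scope ring_scope.

Section BL.
Context {R : realType} {X : completeNormedModType R} (le : X -> X -> Prop).

Definition is_sup (A : set X) (s : X) : Prop :=
  (forall a, A a -> le a s) /\ (forall u, (forall a, A a -> le a u) -> le s u).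

Definition is_inf (A : set X) (s : X) : Prop :=
  (forall a, A a -> le s a) /\ (forall u, (forall a, A a -> le u a) -> le u s).

Definition lsup (A : set X) : X := xget 0 (is_sup A).

Definition is_abs (x ax : X) : Prop := is_sup [set x; - x] ax.

Definition banach_lattice : Prop :=
  (forall x, le x x) /\
  (forall x y, le x y -> le y x -> x = y) /\
  (forall x y z, le x y -> le y z -> le x z) /\
  (forall x y z, le x y -> le (x + z) (y + z)) /\
  (forall (a : R) x y, 0 <= a -> le x y -> le (a *: x) (a *: y)) /\
  (forall x y, exists s, is_sup [set x; y] s) /\
  (forall x y ax ay, is_abs x ax -> is_abs y ay -> le ax ay -> `|x| <= `|y|).

(* order continuous norm: ||x_a|| -> 0 for every net x_a decreasing to 0 *)
Definition order_continuous : Prop :=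
  forall (I : Type) (D : I -> I -> Prop) (x : I -> X),
    (exists i : I, True) ->
    (forall i, D i i) -> (forall i j k, D i j -> D j k -> D i k) ->
    (forall i j, exists k, D i k /\ D j k) ->
    (forall i j, D i j -> le (x j) (x i)) ->
    is_inf (range x) 0 ->
    forall eps : R, 0 < eps -> exists i0, forall i, D i0 i -> `|x i| < eps.

(* operators and semigroups; time parameter t : R, only t >= 0 matters *)
Definition bounded_op (A : X -> X) : Prop :=
  forall r : R, 0 < r -> exists M : R, forall x, `|x| <= r -> `|A x| <= M.

Definition convex_op (A : X -> X) : Prop :=
  forall (lam : R) x y, 0 <= lam <= 1 ->
    le (A (lam *: x + (1 - lam) *: y)) (lam *: A x + (1 - lam) *: A y).

Definition monotone_op (A : X -> X) : Prop :=
  forall x y, le x y -> le (A x) (A y).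

Definition semigroup (S : R -> X -> X) : Prop :=
  [/\ (forall t, 0 <= t -> bounded_op (S t)),
      (forall x, S 0 x = x) &
      (forall t s x, 0 <= t -> 0 <= s -> S (t + s) x = S t (S s x))].

Definition C0_semigroup (S : R -> X -> X) : Prop :=
  semigroup S /\ forall x, S^~ x @ 0^'+ --> x.

Definition convex_semigroup (S : R -> X -> X) : Prop :=
  semigroup S /\ forall t, 0 <= t -> convex_op (S t).

Definition monotone_semigroup (S : R -> X -> X) : Prop :=
  semigroup S /\ forall t, 0 <= t -> monotone_op (S t).

Definition sg_le (S T : R -> X -> X) : Prop :=
  forall t x, 0 <= t -> le (S t x) (T t x).

Definition upper_bound {L : Type} (Ss : L -> R -> X -> X) (T : R -> X -> X) :=
  forall l, sg_le (Ss l) T.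

Definition envelope {L : Type} (Ss : L -> R -> X -> X) (S : R -> X -> X) :=
  [/\ semigroup S, upper_bound Ss S &
      forall T, semigroup T -> upper_bound Ss T -> sg_le S T].

Definition Jh {L : Type} (Ss : L -> R -> X -> X) (h : R) (x : X) : X :=
  if h == 0 then x else lsup [set Ss l h x | l in [set: L]].

(* A partition pi = {0 = t0 < t1 < ... < tm} is encoded by the strictly
   increasing list ts = [t1; ...; tm] of its nonzero points. *)
Fixpoint Jpi_from {L : Type} (Ss : L -> R -> X -> X) (prev : R) (ts : seq R)
  (x : X) : X :=
  match ts with
  | [::] => x
  | t1 :: ts' => Jh Ss (t1 - prev) (Jpi_from Ss t1 ts' x)
  end.

(* J_pi = J_{t1-t0} ... J_{tm-t(m-1)} *)
Definition Jpi {L : Type} (Ss : L -> R -> X -> X) (ts : seq R) : X -> X :=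
  Jpi_from Ss 0 ts.

End BL.

Definition in_Pt {R : realType} (t : R) (ts : seq R) : Prop :=
  path (fun a b : R => a < b) 0 ts /\ last 0 ts = t.

(* Main.v *)
Require Import Defs.
From HB Require Import structures.
From mathcomp Require Import all_boot all_order all_algebra.
From mathcomp Require Import all_classical all_reals all_analysis.
From mathcomp Require Import ring lra.
Import Order.TTheory GRing.Theory Num.Theory.
Import numFieldNormedType.Exports.
Local Open Scope classical_set_scope.
Local Open Scope ring_scope.
Set Implicit Arguments. Unset Strict Implicit. Unset Printing Implicit Defensive.

Section Basics.
Context {R : realType} {X : completeNormedModType R} (le : X -> X -> Prop).
Context (BL : banach_lattice le).

Lemma Lrefl x : le x x.
Proof. by case: BL. Qed.
Lemma Lanti x y : le x y -> le y x -> x = y.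
Proof. by case: BL => _ [H] _; apply: H. Qed.
Lemma Ltrans x y z : le x y -> le y z -> le x z.
Proof. by case: BL => _ [_ [H]] _; apply: H. Qed.
Lemma le_addr x y z : le x y -> le (x + z) (y + z).
Proof. by case: BL => _ [_ [_ [H]]] _; apply: H. Qed.
Lemma le_scale (a : R) x y : 0 <= a -> le x y -> le (a *: x) (a *: y).
Proof. by case: BL => _ [_ [_ [_ [H]]]] _; apply: H. Qed.
Lemma sup2_ex x y : exists s, is_sup le [set x; y] s.
Proof. by case: BL => _ [_ [_ [_ [_ [H]]]]] _; apply: H. Qed.
Lemma lat_norm x y ax ay : is_abs le x ax -> is_abs le y ay -> le ax ay -> `|x| <= `|y|.
Proof. by case: BL => _ [_ [_ [_ [_ [_ H]]]]]; apply: H. Qed.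

Lemma le_addl x y z : le x y -> le (z + x) (z + y).
Proof. by move=> H; rewrite ![z + _]addrC; apply: le_addr. Qed.
Lemma le_add a b c d : le a b -> le c d -> le (a + c) (b + d).
Proof. move=> H1 H2; apply: Ltrans (le_addr c H1) (le_addl b H2). Qed.
Lemma le_sub0 x y : le x y -> le 0 (y - x).
Proof. by move=> H; rewrite -(subrr x); apply: le_addr. Qed.
Lemma le_0sub x y : le 0 (y - x) -> le x y.
Proof. by move=> H; have := le_addr x H; rewrite add0r subrK. Qed.
Lemma le_opp x y : le x y -> le (- y) (- x).
Proof.
move=> H; have := le_addr (- x - y) H.
by rewrite addrA subrr add0r addrCA subrr addr0.
Qed.
Lemma le_subr x y z : le x y -> le (x - z) (y - z).
Proof. exact: le_addr. Qed.
Lemma le_subl x y z : le x y -> le (z - y) (z - x).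
Proof. by move=> H; apply: le_addl; apply: le_opp. Qed.

Lemma in2l (x y : X) : [set x; y] x.
Proof. by left. Qed.
Lemma in2r (x y : X) : [set x; y] y.
Proof. by right. Qed.

Lemma sup2_ub s x y : is_sup le [set x; y] s -> le x s /\ le y s.
Proof. by case=> H _; split; apply: H; [apply: in2l|apply: in2r]. Qed.
Lemma sup2_least s x y u : is_sup le [set x; y] s -> le x u -> le y u -> le s u.
Proof. by case=> _ H hx hy; apply: H => z [->|->]. Qed.

Lemma is_sup_uniq A s1 s2 : is_sup le A s1 -> is_sup le A s2 -> s1 = s2.
Proof.
case=> H1 H1' [H2 H2']; apply: Lanti; [apply: H1' | apply: H2']; by [].
Qed.

Lemma lsupP A : (exists s, is_sup le A s) -> is_sup le A (lsup le A).
Proof. exact: xgetPex. Qed.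

Lemma abs_least x ax u : is_abs le x ax -> le x u -> le (- x) u -> le ax u.
Proof. exact: sup2_least. Qed.
Lemma abs_ub x ax : is_abs le x ax -> le x ax /\ le (- x) ax.
Proof. exact: sup2_ub. Qed.

Lemma abs_ex x : exists ax, is_abs le x ax.
Proof. exact: sup2_ex. Qed.

Lemma abs_ge0 x ax : is_abs le x ax -> le 0 ax.
Proof.
move=> /sup2_ub [h1 h2].
have h2i : (0 : R) <= 2^-1 by rewrite invr_ge0.
have := le_scale h2i (le_add h1 h2).
have -> : (2^-1 : R) *: (ax + ax) = ax.
  by rewrite -mulr2n -[ax *+ 2]scaler_nat scalerA mulVf ?scale1r // pnatr_eq0.
by rewrite subrr scaler0.
Qed.

Lemma abs_pos z : le 0 z -> is_abs le z z.
Proof.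
move=> hz; split; first by move=> a [->|->]; [apply: Lrefl|
  apply: Ltrans (le_opp hz) _; rewrite oppr0].
by move=> u; apply; apply: in2l.
Qed.

Lemma norm_le0 a e ae : le 0 a -> is_abs le e ae -> le a ae -> `|a| <= `|e|.
Proof. by move=> ha he hae; apply: lat_norm (abs_pos ha) he hae. Qed.

Lemma norm_mono a b : le 0 a -> le a b -> `|a| <= `|b|.
Proof.
move=> ha hab; apply: norm_le0 ha (abs_pos (Ltrans ha hab)) hab.
Qed.

Lemma norm_abs a aa : is_abs le a aa -> `|aa| = `|a|.
Proof.
move=> h; have h0 := abs_ge0 h; apply/eqP; rewrite eq_le.
by rewrite (lat_norm (abs_pos h0) h (Lrefl aa)) (lat_norm h (abs_pos h0) (Lrefl aa)).
Qed.

Lemma norm_sqz a y b : le a y -> le y b -> `|y| <= `|a| + `|b|.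
Proof.
move=> hay hyb; have [aa ha] := abs_ex a; have [ab hb] := abs_ex b.
have [ay hy] := abs_ex y.
have ha0 := abs_ge0 ha; have hb0 := abs_ge0 hb.
have hc : le ay (aa + ab).
  apply: (abs_least hy).
    apply: Ltrans hyb _; apply: Ltrans (proj1 (abs_ub hb)) _.
    by rewrite -{1}(add0r ab); apply: le_addr.
  apply: Ltrans (le_opp hay) _; apply: Ltrans (proj2 (abs_ub ha)) _.
  by rewrite -{1}(addr0 aa); apply: le_addl.
have hc0 : le 0 (aa + ab) by rewrite -(addr0 0); apply: le_add.
apply: le_trans (lat_norm hy (abs_pos hc0) hc) _.
by apply: le_trans (ler_normD _ _) _; rewrite (norm_abs ha) (norm_abs hb).
Qed.

Lemma approx_le0 v : (forall eps : R, 0 < eps -> exists e, le v e /\ `|e| < eps) -> le v 0.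
Proof.
move=> H; have [vp hvp] := sup2_ex v 0.
have [hv h0] := sup2_ub hvp.
suff : vp = 0 by move=> e0; rewrite -e0.
apply/normr0_eq0/eqP; rewrite eq_le normr_ge0 andbT.
apply/negPn/negP; rewrite -ltNge => hpos.
have [e [hve he]] := H _ hpos.
have [ae hae] := abs_ex e.
have : `|vp| <= `|e|.
  apply: (norm_le0 h0 hae); apply: (sup2_least hvp _ (abs_ge0 hae)).
  exact: (Ltrans hve (proj1 (abs_ub hae))).
by rewrite leNgt he.
Qed.



Lemma swap_le a w d : le a (w - d) -> le d (w - a).
Proof.
move=> h; have := le_addr (d - a) h.
by rewrite addrCA subrr addr0 addrA subrK.
Qed.

Lemma le0_le x y : le (x - y) 0 -> le x y.
Proof. by move=> h; have := le_addr y h; rewrite subrK add0r. Qed.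

Lemma inf2_ex x y : exists m, [/\ le m x, le m y & forall z, le z x -> le z y -> le z m].
Proof.
have [s hs] := sup2_ex (- x) (- y); have [h1 h2] := sup2_ub hs.
exists (- s); split.
- by have := le_opp h1; rewrite opprK.
- by have := le_opp h2; rewrite opprK.
move=> z hx hy; have := le_opp (sup2_least hs (le_opp hx) (le_opp hy)).
by rewrite opprK.
Qed.

Lemma small_inv (eps : R) : 0 < eps -> exists N : nat, forall n, (N <= n)%N -> (n.+1%:R : R)^-1 < eps.
Proof.
move=> he; exists (Num.trunc eps^-1) => n hn.
rewrite -(invrK eps) ltf_pV2 ?posrE ?invr_gt0 ?ltr0Sn //.
apply: lt_le_trans (truncnS_gt _) _; rewrite ler_nat; exact: hn.
Qed.

Lemma dc_dir (OC : order_continuous le) (D : set X) (d0 b : X) :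
  D d0 -> (forall d, D d -> le d b) ->
  (forall d1 d2, D d1 -> D d2 -> exists d, [/\ D d, le d1 d & le d2 d]) ->
  exists s, is_sup le D s.
Proof.
move=> Dd0 Db Ddir.
pose U := [set u | forall d, D d -> le d u].
pose I := {p : X * X | U p.1 /\ D p.2}.
pose Dr (i j : I) := le (sval j).1 (sval i).1 /\ le (sval i).2 (sval j).2.
pose xn (i : I) := (sval i).1 - (sval i).2.
have i0 : I by exists (b, d0); split.
have Drefl i : Dr i i by split; apply: Lrefl.
have Dtrans i j k : Dr i j -> Dr j k -> Dr i k.
  by move=> [h1 h2] [h3 h4]; split; [apply: Ltrans h3 h1 | apply: Ltrans h2 h4].
have Ddir' i j : exists k, Dr i k /\ Dr j k.
  case: i => [[ui di] [/= Ui Di]]; case: j => [[uj dj] [/= Uj Dj]].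
  have [m [hm1 hm2 hm3]] := inf2_ex ui uj.
  have [d [Dd hd1 hd2]] := Ddir di dj Di Dj.
  have Um : U m by move=> d' Dd'; apply: hm3; [apply: Ui | apply: Uj].
  by exists (exist _ (m, d) (conj Um Dd)); split; split.
have Ddec i j : Dr i j -> le (xn j) (xn i).
  move=> [h1 h2]; rewrite /xn; apply: Ltrans (le_subr _ h1) (le_subl _ h2).
have Iinf : is_inf le (range xn) 0.
  split.
    move=> a [i _ <-]; case: i => [[u d] [/= Uu Dd]]; rewrite /xn /=.
    exact: le_sub0 (Uu _ Dd).
  move=> z Hz; have [zp hzp] := sup2_ex z 0; have [hz hz0] := sup2_ub hzp.
  have zpl i : le zp (xn i).
    apply: (sup2_least hzp); first by apply: Hz; exists i.
    case: i => [[u d] [/= Uu Dd]]; exact: le_sub0 (Uu _ Dd).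
  have Ustep w : U w -> U (w - zp).
    move=> Uw d Dd; apply: swap_le.
    exact: (zpl (exist _ (w, d) (conj Uw Dd))).
  have Un n : U (b - n%:R *: zp).
    elim: n => [|n IH]; first by rewrite scale0r subr0.
    by rewrite -natr1 scalerDl scale1r opprD addrA; apply: Ustep.
  have nb n : n%:R * `|zp| <= `|b - d0|.
    have h0 : le 0 (n%:R *: zp).
      by rewrite -(scaler0 _ (n%:R : R)); apply: le_scale.
    have := norm_mono h0 (swap_le (Un n d0 Dd0)).
    by rewrite normrZ ger0_norm.
  suff e0 : zp = 0 by rewrite -e0.
  apply/normr0_eq0/eqP; rewrite eq_le normr_ge0 andbT.
  apply/negPn/negP; rewrite -ltNge => hpos.
  have := nb (Num.trunc (`|b - d0| / `|zp|)).+1.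
  have := truncnS_gt (`|b - d0| / `|zp|).
  by rewrite ltr_pdivrMr // => h1 h2; have := lt_le_trans h1 h2; rewrite ltxx.
have := fun n : nat => OC I Dr xn (ex_intro _ i0 Logic.I) Drefl Dtrans Ddir' Ddec Iinf
  (n.+1%:R^-1) ltac:(by rewrite invr_gt0 ltr0Sn).
move=> /choice [f hf].
have /choice [up hup] : forall p : I * I, exists k, Dr p.1 k /\ Dr p.2 k.
  by move=> [i j]; apply: Ddir'.
pose k := fix k n := match n with 0%N => f 0%N | m.+1 => up (k m, f m.+1) end.
have hk1 n : Dr (f n) (k n) by case: n => [|n] //=; apply: (proj2 (hup (k n, f n.+1))).
have hk2 n m : (n <= m)%N -> Dr (k n) (k m).
  elim: m => [|m IH]; first by rewrite leqn0 => /eqP ->.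
  rewrite leq_eqVlt => /orP [/eqP -> //|]; rewrite ltnS => /IH h.
  exact: Dtrans h (proj1 (hup (k m, f m.+1))).
pose an n := (sval (k n)).2; pose un n := (sval (k n)).1.
have Uun n : U (un n) by rewrite /un; case: (svalP (k n)).
have Dan n : D (an n) by rewrite /an; case: (svalP (k n)).
have key n m : (n <= m)%N -> `|un n - an m| < n.+1%:R^-1.
  move=> hnm; pose j : I := exist _ (un n, an m) (conj (Uun n) (Dan m)).
  apply: (hf n j); split => /=.
    exact: (proj1 (hk1 n)).
  exact: (proj2 (Dtrans _ _ _ (hk1 n) (hk2 n m hnm))).
have cau n m : (n <= m)%N -> `|an n - an m| <= 2 * n.+1%:R^-1.
  move=> hnm; have -> : an n - an m = (un n - an m) - (un n - an n).
    by rewrite opprB [RHS]addrC addrA subrK.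
  apply: le_trans (ler_normB _ _) _; rewrite mulr2n mulrDl mul1r.
  by apply: lerD; apply: ltW; apply: key.
have cv : cvg (an @ \oo).
  apply: cauchy_cvg; apply: cauchy_exP => e he.
  have [N HN] := small_inv (eps := e / 4) ltac:(by rewrite divr_gt0).
  exists (an N); exists N => // n /= Hn; rewrite -ball_normE /=.
  apply: le_lt_trans (cau _ _ Hn) _.
  have := HN N (leqnn N); rewrite -ltr_pdivlMl // => h; apply: lt_le_trans h _.
  by rewrite [2^-1 * e]mulrC ler_pM2l // lef_pV2 ?posrE // ler_nat.
set s := lim (an @ \oo).
have /cvgrPdist_lt cs : an @ \oo --> s by exact: cv.
have approx eps : 0 < eps -> exists n, `|s - an n| < eps / 2 /\ `|un n - an n| < eps / 2.
  move=> he; have [N1 _ HN1] := cs (eps / 2) ltac:(by rewrite divr_gt0).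
  have [N2 HN2] := small_inv (eps := eps / 2) ltac:(by rewrite divr_gt0).
  exists (maxn N1 N2); split; first by apply: HN1; rewrite /= leq_maxl.
  apply: lt_trans (key _ _ (leqnn _)) _; apply: HN2; exact: leq_maxr.
exists s; split.
  move=> d Dd; apply: le0_le; apply: approx_le0 => eps he.
  have [n [h1 h2]] := approx eps he.
  exists (un n - s); split; first exact: le_subr (Uun n d Dd).
  have -> : un n - s = (un n - an n) - (s - an n) by rewrite opprB addrA subrK.
  apply: le_lt_trans (ler_normB _ _) _; rewrite [eps]splitr; exact: ltrD.
move=> v Uv; apply: le0_le; apply: approx_le0 => eps he.
have [n [h1 h2]] := approx eps he.
exists (s - an n); split; first exact: le_subl (Uv _ (Dan n)).
apply: lt_trans h1 _; rewrite ltr_pdivrMr // ltr_pMr //; exact: ltr1n.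
Qed.

Lemma fsup_ex (F : seq X) x : exists s, is_sup le [set y | y \in x :: F] s.
Proof.
elim: F x => [|y F IH] x.
  exists x; split; first by move=> z /=; rewrite inE => /eqP ->; apply: Lrefl.
  by move=> u; apply; rewrite /= inE.
have [s' [hs1 hs2]] := IH y; have [s hs] := sup2_ex x s'; have [hx hs'] := sup2_ub hs.
exists s; split.
  move=> z /=; rewrite inE => /orP [/eqP -> //|hz].
  exact: Ltrans (hs1 z hz) hs'.
move=> u hu; apply: (sup2_least hs); first by apply: hu; rewrite /= inE eqxx.
by apply: hs2 => z hz; apply: hu; rewrite /= inE hz orbT.
Qed.

Lemma dc (OC : order_continuous le) (A : set X) a0 b :
  A a0 -> (forall a, A a -> le a b) -> exists s, is_sup le A s.
Proof.
move=> Aa0 Ab.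
pose A' := [set s | exists F : seq X, (forall y, y \in F -> A y) /\
   is_sup le [set y | y \in a0 :: F] s].
have finA F : (forall y, y \in F -> A y) -> forall y, y \in a0 :: F -> A y.
  by move=> hF y; rewrite inE => /orP [/eqP -> //|]; apply: hF.
have [s0 hs0] := fsup_ex [::] a0.
have [S hS] : exists S, is_sup le A' S.
  apply: (@dc_dir OC A' s0 b); first by exists [::]; split.
    move=> d [F [hF [_ hd]]]; apply: hd => y hy; apply: Ab; exact: finA hF y hy.
  move=> d1 d2 [F1 [hF1 hd1]] [F2 [hF2 hd2]].
  have [s hs] := fsup_ex (F1 ++ F2) a0.
  exists s; split.
  - exists (F1 ++ F2); split => //.
    by move=> y; rewrite mem_cat => /orP [/hF1|/hF2].
  - apply: (proj2 hd1) => y hy; apply: (proj1 hs).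
    by move: hy; rewrite /= !inE mem_cat => /orP [->//|->]; rewrite orbT.
  - apply: (proj2 hd2) => y hy; apply: (proj1 hs).
    by move: hy; rewrite /= !inE mem_cat => /orP [->//|->]; rewrite !orbT.
exists S; split.
  move=> a Aa; have [s hs] := fsup_ex [:: a] a0.
  apply: Ltrans (proj1 hS s _).
    by apply: (proj1 hs); rewrite /= !inE eqxx orbT.
  by exists [:: a]; split => // y; rewrite inE => /eqP ->.
move=> u hu; apply: (proj2 hS) => s [F [hF hs]].
by apply: (proj2 hs) => y hy; apply: hu; exact: finA hF y hy.
Qed.

Lemma cvx_sup (OC : order_continuous le) (A : X -> X) (D : set X) d0 y z :
  convex_op le A -> monotone_op le A -> bounded_op A ->
  D d0 -> (forall d1 d2, D d1 -> D d2 -> exists d, [/\ D d, le d1 d & le d2 d]) ->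
  is_sup le D y -> (forall d, D d -> le (A d) z) -> le (A y) z.
Proof.
move=> Acv Amo Abd Dd0 Ddir [Dub Dl] Az.
apply: le0_le; apply: approx_le0 => eps he.
have [M hM] := Abd (`|y| + 2) ltac:(by apply: ltr_wpDl).
have M0 : 0 <= M.
  by apply: le_trans (normr_ge0 _) (hM y _); rewrite lerDl.
set mu := Num.min 1 (eps / (2 * M + 1)).
have hmu1 : mu <= 1 by rewrite ge_min lexx.
have hmu2 : mu <= eps / (2 * M + 1) by rewrite ge_min lexx orbT.
have hmu0 : 0 < mu by rewrite lt_min ltr01 /= divr_gt0 //; lra.
pose I := {d : X | D d}.
pose Dr (i j : I) := le (sval i) (sval j).
pose xn (i : I) := y - sval i.
have i0 : I by exists d0.
have Iinf : is_inf le (range xn) 0.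
  split; first by move=> a [[d Dd] _ <-]; rewrite /xn /=; apply: le_sub0; apply: Dub.
  move=> u hu.
  have hy : le y (y - u).
    apply: Dl => d Dd; apply: swap_le; exact: (hu _ (ex_intro2 _ _ (exist _ d Dd) Logic.I erefl)).
  by have := le_subl y hy; rewrite subrr opprB addrC subrK.
have Idir : forall i j : I, exists k, Dr i k /\ Dr j k.
  move=> i j; have [k [Dk h1 h2]] := Ddir _ _ (svalP i) (svalP j).
  by exists (exist _ k Dk); split.
have [[d Dd] hi] := OC I Dr xn (ex_intro _ i0 Logic.I) (fun i => Lrefl (sval i))
  (fun i j k => @Ltrans _ _ _) Idir
  (fun i j h => le_subl _ h) Iinf mu hmu0.
have hyd : `|y - d| < mu by apply: (hi (exist _ d Dd)); apply: Lrefl.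
pose w := d + mu^-1 *: (y - d).
have hyw : (1 - mu) *: d + (1 - (1 - mu)) *: w = y.
  rewrite subKr /w scalerDr scalerA mulfV ?gt_eqF // scale1r addrA -scalerDl.
  by rewrite subrK scale1r addrC subrK.
have hcv := Acv (1 - mu) d w ltac:(apply/andP; split; lra).
rewrite hyw subKr in hcv.
exists (mu *: (A w - A d)); split.
  apply: Ltrans (le_subl _ (Az d Dd)) _.
  apply: Ltrans (le_subr _ hcv) _.
  rewrite scalerBl scale1r scalerBr.
  have -> : A d - mu *: A d + mu *: A w - A d = mu *: A w - mu *: A d.
    by rewrite addrAC [A d - _ - A d]addrAC subrr add0r addrC.
  exact: Lrefl.
have hd : `|d| <= `|y| + 2.
  have -> : d = y - (y - d) by rewrite opprB addrC subrK.
  apply: le_trans (ler_normB _ _) _; rewrite lerD2l; lra.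
have hw : `|w| <= `|y| + 2.
  apply: le_trans (ler_normD _ _) _; rewrite normrZ ger0_norm ?invr_ge0 ?ltW //.
  have : `|d| <= `|y| + 1.
    have -> : d = y - (y - d) by rewrite opprB addrC subrK.
    apply: le_trans (ler_normB _ _) _; rewrite lerD2l; lra.
  have : mu^-1 * `|y - d| < 1.
    by rewrite ltr_pdivrMl // mulr1.
  lra.
rewrite normrZ ger0_norm ?ltW //.
have hAwd : `|A w - A d| <= M + M.
  by apply: le_trans (ler_normB _ _) _; apply: lerD; apply: hM.
have : mu * (2 * M + 1) <= eps by rewrite -ler_pdivlMr // ltr_wpDl // mulr_ge0.
nra.
Qed.

Lemma path_last_ge (p : R) ts : path (fun a b : R => a < b) p ts ->
  p <= last p ts /\ forall u, u \in ts -> u <= last p ts.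
Proof.
elim: ts p => [|a ts IH] p /=; first by split.
move=> /andP [hpa hp]; have [h1 h2] := IH a hp; split.
  exact: le_trans (ltW hpa) h1.
by move=> u; rewrite inE => /orP [/eqP ->|/h2].
Qed.

Lemma path_map_inc (f : R -> R) p ts : (forall u v, u < v -> f u < f v) ->
  path (fun a b : R => a < b) p ts -> path (fun a b : R => a < b) (f p) (map f ts).
Proof.
move=> hf; elim: ts p => [|a ts IH] p //= /andP [h1 h2].
by rewrite hf // IH.
Qed.

Lemma sub_sorted_lt (s1 s : seq R) : sorted (fun a b : R => a < b) s1 ->
  sorted (fun a b : R => a < b) s -> {subset s1 <= s} -> subseq s1 s.
Proof.
move=> h1 h hsub.
have -> : s1 = [seq u <- s | u \in s1].
  apply: (@irr_sorted_eq _ (fun a b : R => a < b)).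
  - by move=> a b c; apply: lt_trans.
  - by move=> a; rewrite ltxx.
  - exact: h1.
  - apply: sorted_filter => //; by move=> a b c; apply: lt_trans.
  by move=> u; rewrite mem_filter; case hu: (u \in s1) => //=; rewrite hsub.
exact: filter_subseq.
Qed.

Lemma in_Pt_cases (t : R) ts : in_Pt t ts ->
  [/\ (ts = [::] /\ t = 0) \/ t \in ts, 0 <= t &
      forall u, u \in ts -> 0 < u /\ u <= t].
Proof.
case=> hp hl; have [h1 h2] := path_last_ge hp; rewrite hl in h1 h2.
have hall := order_path_min (@lt_trans _ R) hp.
split => //.
  case: ts hp hl {h2 hall} => [|a ts] /=; first by move=> _ <-; left.
  by move=> _ <-; right; apply: mem_last.
by move=> u hu; split; [apply: (allP hall) | apply: h2].
Qed.

Lemma merge_Pt (t : R) ts1 ts2 : in_Pt t ts1 -> in_Pt t ts2 ->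
  exists m, [/\ in_Pt t m, subseq ts1 m & subseq ts2 m].
Proof.
move=> h1 h2; have [c1 t0 a1] := in_Pt_cases h1; have [c2 _ a2] := in_Pt_cases h2.
pose m := sort <=%R (undup (ts1 ++ ts2)).
have memm u : (u \in m) = (u \in ts1) || (u \in ts2) by rewrite mem_sort mem_undup mem_cat.
have srt : sorted (fun a b : R => a < b) m.
  have := lt_sorted_uniq_le m; rewrite /= => ->.
  by rewrite sort_uniq undup_uniq sort_sorted //; apply: le_total.
have pm : path (fun a b : R => a < b) 0 m.
  rewrite path_sortedE; last by move=> a b c; apply: lt_trans.
  rewrite srt andbT; apply/allP => u; rewrite memm => /orP [/a1|/a2] []//.
have lm : last 0 m = t.
  have [hl hu] := path_last_ge pm.
  have allle u : u \in m -> u <= t by rewrite memm => /orP [/a1|/a2] [].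
  have tin : (m = [::] /\ t = 0) \/ t \in m.
    case: c1 => [[e1 et]|]; last by move=> ht; right; rewrite memm ht.
    case: c2 => [[e2 _]|]; last by move=> ht; right; rewrite memm ht orbT.
    by left; rewrite /m e1 e2.
  case: tin => [[-> ->] //|tin].
  apply/eqP; rewrite eq_le hu // andbT; apply: allle.
  by case: (m) tin => //= a s _; apply: mem_last.
exists m; split => //; apply: sub_sorted_lt => //.
- exact: path_sorted (proj1 h1).
- by move=> u hu; rewrite memm hu.
- exact: path_sorted (proj1 h2).
- by move=> u hu; rewrite memm hu orbT.
Qed.

Context (OC : order_continuous le) {L : Type} (Ss : L -> R -> X -> X) (T : R -> X -> X).
Context (Lne : exists l : L, True).
Context (HS : forall l, convex_semigroup le (Ss l) /\ monotone_semigroup le (Ss l)).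
Context (HT : semigroup T) (HTub : upper_bound le Ss T).

Local Notation J := (Jh le Ss).
Local Notation Jf := (Jpi_from le Ss).
Local Notation lt_rel := (fun a b : R => a < b).

Lemma sg0 (S : R -> X -> X) x : semigroup S -> S 0 x = x.
Proof. by case. Qed.
Lemma sgD (S : R -> X -> X) t s x : semigroup S -> 0 <= t -> 0 <= s -> S (t + s) x = S t (S s x).
Proof. by case=> _ _ H; apply: H. Qed.
Lemma Ssg l : semigroup (Ss l).
Proof. by case: (HS l) => [[]]. Qed.
Lemma Smono l t : 0 <= t -> monotone_op le (Ss l t).
Proof. by case: (HS l) => _ [] _ H; apply: H. Qed.
Lemma Scvx l t : 0 <= t -> convex_op le (Ss l t).
Proof. by case: (HS l) => [[]] _ H _; apply: H. Qed.

Lemma Jh_sup h x : 0 < h -> is_sup le [set Ss l h x | l in [set: L]] (J h x).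
Proof.
move=> h0; rewrite /Jh gt_eqF //; apply: lsupP.
have [l0 _] := Lne.
apply: (@dc OC _ (Ss l0 h x) (T h x)); first by exists l0.
by move=> a [l _ <-]; apply: HTub; apply: ltW.
Qed.

Lemma Jh_ge l h x : 0 < h -> le (Ss l h x) (J h x).
Proof. by move=> h0; apply: (proj1 (Jh_sup x h0)); exists l. Qed.

Lemma Jh_le (T' : R -> X -> X) h x : upper_bound le Ss T' -> 0 < h -> le (J h x) (T' h x).
Proof.
move=> ub h0; apply: (proj2 (Jh_sup x h0)) => a [l _ <-]; apply: ub; exact: ltW.
Qed.

Lemma Jh_mono h : 0 <= h -> monotone_op le (J h).
Proof.
rewrite le_eqVlt => /orP [/eqP <-|h0] x y hxy; first by rewrite /Jh eqxx.
apply: (proj2 (Jh_sup x h0)) => a [l _ <-].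
exact: Ltrans (Smono l (ltW h0) hxy) (Jh_ge l y h0).
Qed.

Lemma Jh_cvx h : 0 <= h -> convex_op le (J h).
Proof.
rewrite le_eqVlt => /orP [/eqP <-|h0] lam x y hlam; first by rewrite /Jh eqxx; apply: Lrefl.
have /andP [l0 l1] := hlam.
apply: (proj2 (Jh_sup _ h0)) => a [l _ <-].
apply: Ltrans (Scvx l (ltW h0) x y hlam) _.
apply: le_add; apply: le_scale => //; first exact: Jh_ge.
  by rewrite subr_ge0.
exact: Jh_ge.
Qed.

Lemma Jh_ref p a b w : p < a -> a < b -> le (J (b - p) w) (J (a - p) (J (b - a) w)).
Proof.
move=> hpa hab; have hbp : 0 < b - p by rewrite subr_gt0; apply: lt_trans hab.
have hap : 0 < a - p by rewrite subr_gt0.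
have hba : 0 < b - a by rewrite subr_gt0.
apply: (proj2 (Jh_sup w hbp)) => c [l _ <-].
have -> : b - p = (a - p) + (b - a) by ring.
rewrite (sgD _ (Ssg l) (ltW hap) (ltW hba)).
apply: Ltrans (Jh_ge l _ hap).
exact: (Smono l (ltW hap)) _ _ (Jh_ge l w hba).
Qed.

Lemma Jf_mono p ts : path lt_rel p ts -> monotone_op le (Jf p ts).
Proof.
elim: ts p => [|a ts IH] p /=; first by move=> _ x y.
move=> /andP [hpa hp] x y hxy; apply: Jh_mono; first by rewrite subr_ge0 ltW.
exact: IH.
Qed.

Lemma Jf_cvx p ts : path lt_rel p ts -> convex_op le (Jf p ts).
Proof.
elim: ts p => [|a ts IH] p /=; first by move=> _ lam x y _; apply: Lrefl.
move=> /andP [hpa hp] lam x y hlam.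
have ha : 0 <= a - p by rewrite subr_ge0 ltW.
have hc := Jh_cvx ha (Jf a ts x) (Jf a ts y) hlam.
apply: Ltrans _ hc.
have hm := Jh_mono ha; exact: hm _ _ (IH _ hp lam x y hlam).
Qed.

Lemma Jf_cat p s1 s2 x : Jf p (s1 ++ s2) x = Jf p s1 (Jf (last p s1) s2 x).
Proof. by elim: s1 p => [|a s1 IH] p //=; rewrite IH. Qed.

Lemma Jf_shift p c ts x : Jf (p + c) (map (fun u => u + c) ts) x = Jf p ts x.
Proof.
elim: ts p => [|a ts IH] p //=; rewrite IH.
by have -> : a + c - (p + c) = a - p by ring.
Qed.

Lemma Jf_ub (T' : R -> X -> X) p ts r y : semigroup T' -> upper_bound le Ss T' ->
  path lt_rel p ts -> 0 <= r -> le (Jf p ts (T' r y)) (T' (last p ts - p + r) y).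
Proof.
move=> sgT ub; elim: ts p => [|a ts IH] p /=.
  by move=> _ _; rewrite subrr add0r; apply: Lrefl.
move=> /andP [hpa hp] hr.
have hap : 0 < a - p by rewrite subr_gt0.
have hL : 0 <= last a ts - a + r.
  by apply: addr_ge0 => //; rewrite subr_ge0; exact: (proj1 (path_last_ge hp)).
apply: Ltrans (Jh_mono (ltW hap) (IH _ hp hr)) _.
apply: Ltrans (Jh_le _ ub hap) _.
rewrite -(sgD _ sgT (ltW hap) hL).
have -> : a - p + (last a ts - a + r) = last a ts - p + r by ring.
exact: Lrefl.
Qed.

Lemma Jf_sub p ts ts' x : path lt_rel p ts' -> subseq ts ts' -> last p ts = last p ts' ->
  le (Jf p ts x) (Jf p ts' x).
Proof.
elim: ts' p ts => [|a r IH] p ts.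
  by rewrite subseq0 => _ /eqP -> _; apply: Lrefl.
move=> /= /andP [hpa hr].
have hap : 0 <= a - p by rewrite subr_ge0 ltW.
case: ts => [|b q].
  move=> _ /= hl; have [h1 _] := path_last_ge hr.
  by move: (lt_le_trans hpa h1); rewrite -hl ltxx.
rewrite /=; case: eqP => [-> hsub hl|hne hsub hl].
  have hm := Jh_mono hap; apply: hm; exact: IH.
have hb : b \in r by apply: (mem_subseq hsub); rewrite inE eqxx.
have hab : a < b by apply: (allP (order_path_min (@lt_trans _ R) hr)).
apply: Ltrans (Jh_ref _ hpa hab) _.
have hm := Jh_mono hap; apply: hm.
have -> : J (b - a) (Jf b q x) = Jf a (b :: q) x by [].
exact: IH.
Qed.

Definition Senv (t : R) (x : X) : X := lsup le [set Jpi le Ss ts x | ts in in_Pt t].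

Lemma Jpi_le (T' : R -> X -> X) t ts x : semigroup T' -> upper_bound le Ss T' ->
  in_Pt t ts -> le (Jpi le Ss ts x) (T' t x).
Proof.
move=> sgT ub [hp hl]; have := Jf_ub x sgT ub hp (lexx 0).
by rewrite /Jpi (sg0 _ sgT) hl subr0 addr0.
Qed.

Lemma Pt_single (t : R) : 0 < t -> in_Pt t [:: t].
Proof. by move=> h; split => //=; rewrite h. Qed.

Lemma Pt_ex (t : R) : 0 <= t -> exists ts, in_Pt t ts.
Proof.
rewrite le_eqVlt => /orP [/eqP <-|h]; first by exists [::].
by exists [:: t]; apply: Pt_single.
Qed.

Lemma Pt0 (ts : seq R) : in_Pt 0 ts -> ts = [::].
Proof.
case: ts => // a ts [/= /andP [h0 hp] hl].
have [h1 _] := path_last_ge hp; move: (lt_le_trans h0 h1); by rewrite hl ltxx.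
Qed.

Lemma Senv_sup t x : 0 <= t -> is_sup le [set Jpi le Ss ts x | ts in in_Pt t] (Senv t x).
Proof.
move=> ht; apply: lsupP; have [ts hts] := Pt_ex ht.
apply: (@dc OC _ (Jpi le Ss ts x) (T t x)); first by exists ts.
by move=> a [ts' h' <-]; apply: Jpi_le.
Qed.

Lemma Senv0 x : Senv 0 x = x.
Proof.
apply: is_sup_uniq (Senv_sup x (lexx 0)) _; split.
  by move=> a [ts /Pt0 -> <-]; apply: Lrefl.
by move=> u; apply; exists [::].
Qed.

Lemma Senv_ge l t x : 0 <= t -> le (Ss l t x) (Senv t x).
Proof.
rewrite le_eqVlt => /orP [/eqP <-|h].
  by rewrite Senv0 (sg0 _ (Ssg l)); apply: Lrefl.
apply: Ltrans (Jh_ge l x h) _; apply: (proj1 (Senv_sup x (ltW h))).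
by exists [:: t]; [apply: Pt_single | rewrite /Jpi /= subr0].
Qed.

Lemma Senv_le (T' : R -> X -> X) t x : semigroup T' -> upper_bound le Ss T' -> 0 <= t ->
  le (Senv t x) (T' t x).
Proof.
move=> sgT ub ht; apply: (proj2 (Senv_sup x ht)) => a [ts hts <-].
exact: Jpi_le.
Qed.

Lemma Senv_mono t : 0 <= t -> monotone_op le (Senv t).
Proof.
move=> ht x y hxy; apply: (proj2 (Senv_sup x ht)) => a [ts hts <-].
apply: Ltrans (proj1 (Senv_sup y ht) _ (ex_intro2 _ _ ts hts erefl)).
have hm := Jf_mono (proj1 hts); exact: hm _ _ hxy.
Qed.

Lemma Senv_cvx t : 0 <= t -> convex_op le (Senv t).
Proof.
move=> ht lam x y hlam; apply: (proj2 (Senv_sup _ ht)) => a [ts hts <-].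
have hc := Jf_cvx (proj1 hts) x y hlam.
apply: Ltrans hc _; have /andP [l0 l1] := hlam.
apply: le_add; apply: le_scale.
- exact: l0.
- exact: (proj1 (Senv_sup x ht) _ (ex_intro2 _ _ ts hts erefl)).
- by rewrite subr_ge0.
- exact: (proj1 (Senv_sup y ht) _ (ex_intro2 _ _ ts hts erefl)).
Qed.

Lemma Senv_bd t : 0 <= t -> bounded_op (Senv t).
Proof.
move=> ht r hr; have [l0 _] := Lne.
have [M1 h1] : exists M, forall x, `|x| <= r -> `|Ss l0 t x| <= M.
  by case: (Ssg l0) => hb _ _; apply: hb.
have [M2 h2] : exists M, forall x, `|x| <= r -> `|T t x| <= M.
  by case: HT => hb _ _; apply: hb.
exists (M1 + M2) => x hx.
apply: le_trans (norm_sqz (Senv_ge l0 x ht) (Senv_le x HT HTub ht)) _.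
by apply: lerD; [apply: h1 | apply: h2].
Qed.

Lemma Senv_add t s x : 0 <= t -> 0 <= s -> Senv (t + s) x = Senv t (Senv s x).
Proof.
move=> ht hs.
case: (eqVneq t 0) => [->|t0]; first by rewrite add0r Senv0.
case: (eqVneq s 0) => [->|s0]; first by rewrite addr0 Senv0.
have htp : 0 < t by rewrite lt_neqAle eq_sym t0 ht.
have hsp : 0 < s by rewrite lt_neqAle eq_sym s0 hs.
have hts : 0 <= t + s by apply: addr_ge0.
apply: Lanti.
- apply: (proj2 (Senv_sup x hts)) => a [ts hts' <-].
  have hP2 : in_Pt (t + s) [:: t; t + s].
    by split => //=; rewrite htp /= ltrDl hsp.
  have [m [hm hsub1 hsub2]] := merge_Pt hts' hP2.
  apply: Ltrans (Jf_sub x (proj1 hm) hsub1 _) _.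
    by rewrite (proj2 hts') (proj2 hm).
  have tin : t \in m by apply: (mem_subseq hsub2); rewrite inE eqxx.
  case/splitPr: tin hm => m1 m2 [hp hl].
  rewrite /Jpi -cat_rcons Jf_cat last_rcons.
  have hp1 : path lt_rel 0 (rcons m1 t).
    by rewrite rcons_path; move: hp; rewrite cat_path /= => /and3P [-> ->].
  have hp2 : path lt_rel t m2.
    by move: hp; rewrite cat_path /= => /and3P [_ _ ->].
  rewrite last_cat /= in hl.
  have em : m2 = map (fun u => u + t) (map (fun u => u - t) m2).
    by rewrite -map_comp map_id_in // => u _; rewrite /= subrK.
  have e2 : Jf t m2 x = Jpi le Ss (map (fun u => u - t) m2) x.
    by have := Jf_shift 0 t (map (fun u => u - t) m2) x; rewrite add0r -em.
  have hPs : in_Pt s (map (fun u => u - t) m2).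
    split.
      have := @path_map_inc (fun u => u - t) t m2 _ hp2; rewrite subrr; apply.
      by move=> u v; rewrite ltrD2r.
    have := last_map (fun u => u - t) m2 t; rewrite /= subrr hl => ->; ring.
  rewrite e2.
  have hle := proj1 (Senv_sup x hs) _ (ex_intro2 _ _ _ hPs erefl).
  have hm := Jf_mono hp1; apply: Ltrans (hm _ _ hle) _.
  apply: (proj1 (Senv_sup _ ht)); exists (rcons m1 t) => //; split => //.
  by rewrite last_rcons.
- apply: (@cvx_sup OC (Senv t) [set Jpi le Ss ts x | ts in in_Pt s] (Jpi le Ss [:: s] x)).
  + exact: Senv_cvx.
  + exact: Senv_mono.
  + exact: Senv_bd.
  + by exists [:: s] => //; apply: Pt_single.
  + move=> d1 d2 [ts1 h1 <-] [ts2 h2 <-]; have [m [hm s1 s2]] := merge_Pt h1 h2.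
    exists (Jpi le Ss m x); split; first by exists m.
      by apply: Jf_sub (proj1 hm) s1 _; rewrite (proj2 h1) (proj2 hm).
    by apply: Jf_sub (proj1 hm) s2 _; rewrite (proj2 h2) (proj2 hm).
  + exact: Senv_sup.
  move=> d [ts2 h2 <-]; apply: (proj2 (Senv_sup _ ht)) => a [ts1 h1 <-].
  apply: (proj1 (Senv_sup x hts)); exists (ts1 ++ map (fun u => u + t) ts2).
    split.
      rewrite cat_path (proj1 h1) /= (proj2 h1).
      have := @path_map_inc (fun u => u + t) 0 ts2 _ (proj1 h2); rewrite add0r; apply.
      by move=> u v; rewrite ltrD2r.
    rewrite last_cat (proj2 h1).
    have := last_map (fun u => u + t) ts2 0; rewrite /= add0r (proj2 h2) => ->.
    by rewrite addrC.
  rewrite /Jpi Jf_cat (proj2 h1).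
  by have := Jf_shift 0 t ts2 x; rewrite add0r => ->.
Qed.

Lemma main_inner : exists S : R -> X -> X,
    [/\ envelope le Ss S,
        (forall h x, 0 < h -> is_sup le [set Ss l h x | l in [set: L]] (Jh le Ss h x)),
        (forall t x, 0 <= t ->
           is_sup le [set Jpi le Ss ts x | ts in in_Pt t] (S t x)) &
        (C0_semigroup T -> (exists l0, C0_semigroup (Ss l0)) -> C0_semigroup S)].
Proof.
have sgS : semigroup Senv.
  split; [exact: Senv_bd | exact: Senv0 | move=> t s x ht hs; exact: Senv_add].
exists Senv; split.
- split => //; first by move=> l t x ht; apply: Senv_ge.
  by move=> T' sgT ub t x ht; apply: Senv_le.
- by move=> h x h0; apply: Jh_sup.
- by move=> t x ht; apply: Senv_sup.
move=> [_ hT0] [l0 [_ hl0]]; split => // x.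
apply/cvgrPdist_lt => e he.
move/cvgrPdist_lt: (hT0 x) => h1; move/cvgrPdist_lt: (hl0 x) => h2.
near=> t.
have ht : 0 < t by near: t; exact: nbhs_right_gt.
have := norm_sqz (le_subl x (Senv_le x HT HTub (ltW ht))) (le_subl x (Senv_ge l0 x (ltW ht))).
move=> hb; apply: le_lt_trans hb _; rewrite [e]splitr; apply: ltrD.
  by near: t; exact: h1 (e / 2) ltac:(by rewrite divr_gt0).
by near: t; exact: h2 (e / 2) ltac:(by rewrite divr_gt0).
Unshelve. all: by end_near.
Qed.
End Basics.

Unset Implicit Arguments. Set Strict Implicit. Set Printing Implicit Defensive.

Theorem corollary4p4 (R : realType) (X : completeNormedModType R)
  (le : X -> X -> Prop) (L : Type) (Ss : L -> R -> X -> X) (T : R -> X -> X) :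
  banach_lattice le -> order_continuous le ->
  (exists l : L, True) ->
  (forall l, convex_semigroup le (Ss l) /\ monotone_semigroup le (Ss l)) ->
  semigroup T -> upper_bound le Ss T ->
  exists S : R -> X -> X,
    [/\ envelope le Ss S,
        (forall h x, 0 < h -> is_sup le [set Ss l h x | l in [set: L]] (Jh le Ss h x)),
        (forall t x, 0 <= t ->
           is_sup le [set Jpi le Ss ts x | ts in in_Pt t] (S t x)) &
        (C0_semigroup T -> (exists l0, C0_semigroup (Ss l0)) -> C0_semigroup S)].
Proof.
move=> BL OC Lne HS HT HTub.
exact: (@main_inner R X le BL OC L Ss T Lne HS HT HTub).
Qed.
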